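(* Let $n>2$ be an integer, $A$ an abelian group (written additively) of order $n$, and $\alpha\in A$ an element of order greater than $2$. Let $G=\{1,u,v,w\}$ be the Klein four-group with neutral element $1$. Define $\mu:G\times G\to A$ by $\mu(x,y)=\alpha$ if $(x,y)\in\{(v,w),(w,u),(w,w)\}$, $\mu(v,u)=-\alpha$, and $\mu(x,y)=0$ otherwise. Then $(G,A,\mu)$ is a non-flexible (hence nonassociative), noncommutative C-loop whose nucleus is $N=\{(1,a): a\in A\}$.
   Context: For a group $G$ and abelian group $A$, a factor set is a map $\mu:G\times G\to A$ with $\mu(1,g)=\mu(g,1)=0$; $(G,A,\mu)$ denotes $G\times A$ with multiplication $(g,a)(h,b)=(gh,\,a+b+\mu(g,h))$. A C-loop is a loop satisfying $x(y(yz))=((xy)y)z$. A loop is flexible if $(xy)x=x(yx)$ for all $x,y$. The nucleus is the set of elements $a$ with $a(yz)=(ay)z$, $y(az)=(ya)z$, $y(za)=(yz)a$ for all $y,z$. *)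

(* Defs.v *)
From HB Require Import structures.
From mathcomp Require Import all_boot all_order all_algebra all_fingroup.
Set Implicit Arguments. Unset Strict Implicit. Unset Printing Implicit Defensive.
Import GRing.Theory.
Local Open Scope ring_scope.

Inductive K4 := k1 | ku | kv | kw.

Definition K4mul (x y : K4) : K4 :=
  match x, y with
  | k1, z | z, k1 => z
  | ku, ku | kv, kv | kw, kw => k1
  | ku, kv | kv, ku => kw
  | ku, kw | kw, ku => kv
  | kv, kw | kw, kv => ku
  end.

Definition ext_mul (A : zmodType) (G : Type) (gmul : G -> G -> G)
  (mu : G -> G -> A) (p q : G * A) : G * A :=
  (gmul p.1 q.1, p.2 + q.2 + mu p.1 q.1).

Definition mu_alpha (A : zmodType) (alpha : A) (x y : K4) : A :=
  match x, y with
  | kv, kw | kw, ku | kw, kw => alpha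
  | kv, ku => - alpha
  | _, _ => 0
  end.

Definition is_loop (L : Type) (mul : L -> L -> L) (e : L) : Prop :=
  (forall x, mul e x = x /\ mul x e = x) /\
  (forall a b, exists! x, mul a x = b) /\
  (forall a b, exists! y, mul y a = b).

Definition C_law (L : Type) (mul : L -> L -> L) : Prop :=
  forall x y z, mul x (mul y (mul y z)) = mul (mul (mul x y) y) z.

Definition is_C_loop (L : Type) (mul : L -> L -> L) (e : L) : Prop :=
  is_loop mul e /\ C_law mul.

Definition flexible (L : Type) (mul : L -> L -> L) : Prop :=
  forall x y, mul (mul x y) x = mul x (mul y x).

Definition associative_magma (L : Type) (mul : L -> L -> L) : Prop :=
  forall x y z, mul x (mul y z) = mul (mul x y) z.

Definition commutative_magma (L : Type) (mul : L -> L -> L) : Prop :=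
  forall x y, mul x y = mul y x.

Definition in_nucleus (L : Type) (mul : L -> L -> L) (a : L) : Prop :=
  forall y z, mul a (mul y z) = mul (mul a y) z /\
              mul y (mul a z) = mul (mul y a) z /\
              mul y (mul z a) = mul (mul y z) a.

(* Main.v *)
Require Import Defs.
From mathcomp Require Import all_boot all_order all_algebra all_fingroup all_solvable.
Import GRing.Theory.
Local Open Scope ring_scope.

Definition mi (x y : K4) : int :=
  match x, y with
  | kv, kw | kw, ku | kw, kw => 1
  | kv, ku => -1
  | _, _ => 0
  end.

Lemma muE (A : zmodType) (al : A) x y : mu_alpha al x y = al *~ mi x y.
Proof. by case: x; case: y; rewrite /= ?mulr0z ?mulr1z ?mulrN1z. Qed.

Lemma Cgen (A : zmodType) (al a b c : A) i1 i2 i3 j1 j2 j3 :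
  (i1 + i2 + i3 = j1 + j2 + j3)%R ->
  a + (b + (b + c + al *~ i1) + al *~ i2) + al *~ i3 =
  a + b + al *~ j1 + b + al *~ j2 + c + al *~ j3.
Proof.
move=> h.
have -> : a + b + al *~ j1 + b + al *~ j2 + c + al *~ j3 = a + b + b + c + al *~ (j1 + j2 + j3).
  by rewrite !mulrzDr !addrA (addrAC _ (al *~ j1) b) (addrAC _ (al *~ j2) c) (addrAC _ (al *~ j1) c).
by rewrite -h !mulrzDr !addrA.
Qed.

Lemma Agen (A : zmodType) (al a b c : A) i1 i2 j1 j2 :
  (i1 + i2 = j1 + j2)%R ->
  a + (b + c + al *~ i1) + al *~ i2 = a + b + al *~ j1 + c + al *~ j2.
Proof.
move=> h.
have -> : a + b + al *~ j1 + c + al *~ j2 = a + b + c + al *~ (j1 + j2).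
  by rewrite !mulrzDr !addrA (addrAC _ (al *~ j1) c).
by rewrite -h !mulrzDr !addrA.
Qed.

Lemma Adef (A : zmodType) (al a b c : A) i1 i2 j1 j2 :
  a + (b + c + al *~ i1) + al *~ i2 = a + b + al *~ j1 + c + al *~ j2 ->
  al *~ (i1 + i2) = al *~ (j1 + j2).
Proof.
rewrite !mulrzDr !addrA (addrAC _ (al *~ j1)) -!addrA => /addrI/addrI/addrI.
done.
Qed.

Lemma ord2 (A : finZmodType) (al : A) : (2 < #[al]%g)%N -> al *+ 2 != 0.
Proof.
move=> h; apply/eqP => e.
have : (#[al]%g %| 2)%N by rewrite order_dvdn FinRing.zmodXgE e.
move/dvdn_leq => /(_ isT) h2.
by move: (leq_trans h h2); rewrite ltnn.
Qed.

Lemma neq2 (A : zmodType) (al : A) i j : al *+ 2 != 0 ->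
  al *~ i = al *~ j -> (i - j = 2 \/ i - j = -2) -> False.
Proof.
move=> nz /eqP; rewrite -subr_eq0 -mulrzBr => /eqP e [] h; move: e; rewrite h.
  by move=> e; move/eqP: nz; apply; rewrite -e.
by rewrite mulrNz => /eqP; rewrite oppr_eq0 => /eqP e; move/eqP: nz; apply; rewrite -e.
Qed.

Ltac icase x y z := case: x; case: y; case: z; reflexivity.

Theorem proposition3p3 (n : nat) (A : finZmodType) (alpha : A) :
  (2 < n)%N -> #|A| = n -> (2 < #[alpha]%g)%N ->
  let L := ext_mul K4mul (mu_alpha alpha) in
  is_C_loop L (k1, 0) /\
  ~ flexible L /\ ~ associative_magma L /\ ~ commutative_magma L /\
  (forall p : K4 * A, in_nucleus L p <-> exists a : A, p = (k1, a)).
Proof.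
move=> _ _ hord L.
have nz2 := @ord2 A alpha hord.
have nz : alpha != 0.
  by apply: contra nz2 => /eqP ->; rewrite mul0rn.
have nfl : ~ flexible L.
  move=> fl; move: (fl (kv, 0) (kw, 0)); rewrite /L /ext_mul /=.
  move=> [] /eqP; rewrite !addr0 !add0r -subr_eq0 opprK => e.
  by move: nz2; rewrite mulr2n e.
split; [split; [split; [|split]|] | split; [exact nfl|split; [|split]]].
- case=> g a; rewrite /L /ext_mul /= ?muE.
  by case: g; rewrite /= ?mulr0z ?addr0 ?add0r.
- case=> a1 a2 [b1 b2].
  exists (K4mul a1 b1, b2 - a2 - alpha *~ mi a1 (K4mul a1 b1)).
  rewrite /L /ext_mul /= ?muE; split.
    congr pair; first by case: a1; case: b1.
    by rewrite /= muE addrA subrK addrC subrK.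
  case=> x1 x2 [] <- <-.
  have -> : K4mul a1 (K4mul a1 x1) = x1 by case: a1; case: x1.
  by rewrite muE (addrAC _ _ (- a2)) addrK (addrC a2) addrK.
- case=> a1 a2 [b1 b2].
  exists (K4mul b1 a1, b2 - a2 - alpha *~ mi (K4mul b1 a1) a1).
  rewrite /L /ext_mul /= ?muE; split.
    congr pair; first by case: a1; case: b1.
    by rewrite /= muE addrAC subrK subrK.
  case=> x1 x2 [] <- <-.
  have -> : K4mul (K4mul x1 a1) a1 = x1 by case: a1; case: x1.
  by rewrite muE (addrAC _ _ (- a2)) addrK addrK.
- case=> x a [y b] [z c]; rewrite /L /ext_mul /= ?muE; congr pair.
    by case: x; case: y; case: z.
  by apply: Cgen; icase x y z.
- move=> ass; apply: nfl => x y; by rewrite ass.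
- move=> com; move: (com (kv, 0) (kw, 0)); rewrite /L /ext_mul /= => [] [].
  by rewrite !addr0 add0r => e; move: nz; rewrite e eqxx.
- case=> g a; split.
    case: g => H; first by exists a.
    + move: (H (ku, 0) (kv, 0)) => [_ [_]]; rewrite /L /ext_mul !muE /=.
      move=> [] /Adef /(@neq2 _ _ _ _ nz2) hh; exfalso; apply: hh; first [left; reflexivity | right; reflexivity].
    + move: (H (ku, 0) (kv, 0)) => [h _]; move: h; rewrite /L /ext_mul !muE /=.
      move=> [] /Adef /(@neq2 _ _ _ _ nz2) hh; exfalso; apply: hh; first [left; reflexivity | right; reflexivity].
    + move: (H (ku, 0) (ku, 0)) => [_ [h _]]; move: h; rewrite /L /ext_mul !muE /=.
      move=> [] /Adef /(@neq2 _ _ _ _ nz2) hh; exfalso; apply: hh; first [left; reflexivity | right; reflexivity].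
  case=> a' [] -> -> [y b] [z c]; rewrite /L /ext_mul !muE /=.
  split; [|split]; congr pair; try (apply: Agen; case: y; case: z; reflexivity); by case: y; case: z.
Qed.
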